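(* Under the standing assumptions, suppose $\bar u\in X\setminus\{0\}$ satisfies $\bar\lambda:=R(\bar u)=\max_{u\in X\setminus\{0\}}R(u)<\infty$, and let $\bar\zeta\in\partial J(\bar u)$. Then $\bar\zeta/\bar\lambda\in\partial H(\bar u)$; that is, $\bar u$ is a $p$-eigenvector of $J$ with subgradient $\bar\zeta$ and eigenvalue $\bar\lambda$.
   Context: Standing assumptions: $X$ is a real reflexive Banach space with dual $X^*$ and duality pairing $\langle\cdot,\cdot\rangle$; $\Gamma_0(X)$ is the class of proper, lower semi-continuous, convex functionals $X\to\mathbb{R}\cup\{+\infty\}$. Fix $1<p<\infty$ and $q=\frac{p}{p-1}$. Let $J\in\Gamma_0(X)$, and let $H\in\Gamma_0(X)$ be absolutely $p$-homogeneous ($H(tu)=|t|^pH(u)$) such that $|u|_H:=(pH(u))^{1/p}$ is a norm on $X$, so $H(u)=\frac1p|u|_H^p$. The subdifferential is $\partial J(u)=\{\zeta\in X^*:\ J(u)+\langle\zeta,v-u\rangle\le J(v)\ \forall v\in X\}$. Growth assumption: there is $c>0$ with $H(u)\le cJ(u)$ for all $u\in X$. The Rayleigh quotient is $R(u)=J(u)/H(u)$ for $u\ne0$. A $p$-eigenvector of $J$: $u\in X\setminus\{0\}$ with subgradient $\zeta\in\partial J(u)$ and eigenvalue $\lambda=R(u)\in\mathbb{R}$ such that $\zeta\in\lambda\,\partial H(u)$. *)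

(* Defs.v *)
From HB Require Import structures.
From mathcomp Require Import all_boot all_order all_algebra.
From mathcomp Require Import all_classical all_reals all_analysis.
Set Implicit Arguments. Unset Strict Implicit. Unset Printing Implicit Defensive.
Import Order.TTheory GRing.Theory Num.Theory.
Import numFieldNormedType.Exports.
Local Open Scope ring_scope.

Section Defs.
Context {R : realType} {X : normedModType R}.

Definition is_dual (f : X -> R) : Prop :=
  (forall (a : R) (x y : X), f (a *: x + y)%R = (a * f x + f y)%R) /\ continuous f.

Definition dual_bound (f : X -> R) (M : R) : Prop :=
  forall x : X, (`|f x| <= M * `|x|)%R.

(* reflexivity: every bounded linear functional on X^* is evaluation at a point *)
Definition reflexive_space : Prop :=
  forall Phi : (X -> R) -> R,
    (forall (a : R) (f g : X -> R), is_dual f -> is_dual g ->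
        Phi (fun x => a * f x + g x)%R = (a * Phi f + Phi g)%R) ->
    (exists C : R, forall (f : X -> R) (M : R), is_dual f -> dual_bound f M ->
        (`|Phi f| <= C * M)%R) ->
    exists x : X, forall f, is_dual f -> Phi f = f x.

Definition Gamma0 (F : X -> \bar R) : Prop :=
  [/\ (forall u, F u != -oo%E),
      (exists u, (F u < +oo)%E),
      lower_semicontinuous F &
      (forall (t : R) (u v : X), 0 < t < 1 ->
          (F (t *: u + (1 - t) *: v)%R <= t%:E * F u + (1 - t)%:E * F v)%E)].

Definition is_norm (N : X -> R) : Prop :=
  [/\ (forall u, 0 <= N u)%R,
      (forall u, N u = 0 -> u = 0),
      (forall (t : R) u, N (t *: u) = `|t| * N u)%R &
      (forall u v, N (u + v)%R <= N u + N v)%R].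

Definition abs_p_homogeneous (p : R) (H : X -> \bar R) : Prop :=
  forall (t : R) (u : X), H (t *: u) = ((`|t| `^ p)%:E * H u)%E.

(* |u|_H := (p H(u))^(1/p) ; H is finite-valued whenever this is a norm *)
Definition Hnorm (p : R) (H : X -> \bar R) (u : X) : R :=
  ((p * fine (H u)) `^ p^-1)%R.

Definition Hnorm_is_norm (p : R) (H : X -> \bar R) : Prop :=
  (forall u, H u \is a fin_num) /\ is_norm (Hnorm p H).

Definition subdiff (F : X -> \bar R) (u : X) (z : X -> R) : Prop :=
  is_dual z /\ forall v, (F u + (z (v - u)%R)%:E <= F v)%E.

(* Rayleigh quotient R(u) = J(u)/H(u) (H finite and > 0 for u <> 0) *)
Definition Rayleigh (J H : X -> \bar R) (u : X) : \bar R :=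
  (J u * ((fine (H u))^-1)%:E)%E.

Definition p_eigenvector (J H : X -> \bar R) (u : X) (z : X -> R) (lam : R)
  : Prop :=
  [/\ (u != 0)%R, subdiff J u z, Rayleigh J H u = lam%:E &
      exists eta, subdiff H u eta /\ forall x, z x = (lam * eta x)%R].

End Defs.

(* Main.v *)
Require Import Defs.
From HB Require Import structures.
From mathcomp Require Import all_boot all_order all_algebra.
From mathcomp Require Import all_classical all_reals all_analysis.
From mathcomp Require Import lra.
Import Order.TTheory GRing.Theory Num.Theory.
Import numFieldNormedType.Exports.
Local Open Scope ring_scope.

Theorem mainTheorem4 (R : realType) (X : completeNormedModType R)
  (p c : R) (J H : X -> \bar R) (ubar : X) (zbar : X -> R) :
  @reflexive_space R X ->
  1 < p ->
  Gamma0 J -> Gamma0 H ->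
  abs_p_homogeneous p H -> Hnorm_is_norm p H ->
  0 < c -> (forall u, (H u <= c%:E * J u)%E) ->
  ubar != 0 ->
  (forall u, u != 0 -> (Rayleigh J H u <= Rayleigh J H ubar)%E) ->
  (Rayleigh J H ubar < +oo)%E ->
  subdiff J ubar zbar ->
  let lam := fine (Rayleigh J H ubar) in
  subdiff H ubar (fun v => zbar v / lam) /\
  p_eigenvector J H ubar zbar lam.
Proof.
move=> _ Hp [Jninf _ _ _] [_ _ _ Hconv] Hhom [Hfin [_ Hn0 _ _]] c0 Hgrow ub0
  Hmax HRfin [[zlin zcont] zsub] lam.
set h := fun u => fine (H u).
have HE : forall u, H u = (h u)%:E by move=> u; rewrite /h fineK.
have hhom : forall t u, h (t *: u) = `|t| `^ p * h u.
  by move=> t u; rewrite {1}/h Hhom HE -EFinM.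
have p0 : p != 0 by apply/eqP => p0; rewrite p0 in Hp; lra.
have h0 : h 0 = 0.
  by have := hhom 0 0; rewrite scale0r normr0 powR0 // mul0r.
have hnn : forall u, 0 <= h u.
  move=> u; have := Hconv (1/2) u (- u).
  have -> : (1 / 2) *: u + (1 - 1 / 2) *: - u = 0.
    rewrite scalerN -scalerBl.
    have -> : 1 / 2 - (1 - 1/2) = 0 :> R by lra.
    by rewrite scale0r.
  rewrite !HE -(scaleN1r u) hhom normrN normr1 powR1 mul1r h0.
  rewrite -EFinM -EFinM -EFinD lee_fin => H1.
  have h1 : (0:R) < 2^-1 by rewrite invr_gt0.
  have h2 : (2^-1:R) < 1 by rewrite invf_lt1 // ltr1n.
  move: H1; rewrite h1 h2 => /(_ isT); lra.
have hpos : forall u, u != 0 -> 0 < h u.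
  move=> u u0; rewrite lt0r hnn andbT; apply/eqP => hu0.
  move/eqP: u0; apply; apply: Hn0; rewrite /Hnorm -/(h u) hu0 mulr0 powR0 //.
  by rewrite invr_eq0.
have hub := hpos _ ub0.
have zadd : forall a x y, zbar (a *: x + y) = a * zbar x + zbar y := zlin.
have z0 : zbar 0 = 0.
  have := zadd 1 0 0; rewrite scale1r addr0 mul1r => E; lra.
have zsc : forall a x, zbar (a *: x) = a * zbar x.
  by move=> a x; have := zadd a x 0; rewrite !addr0 z0 addr0.
have [j Jj] : exists j, J ubar = j%:E.
  move: HRfin (Jninf ubar); rewrite /Rayleigh -/(h ubar).
  case: (J ubar) => [r| |] //.
  - by move=> _ _; exists r.
  - by rewrite mulyr gtr0_sg ?invr_gt0 // mul1e.
have j0 : 0 < j.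
  have := Hgrow ubar; rewrite HE Jj -EFinM lee_fin => E.
  rewrite -(pmulr_rgt0 _ c0); lra.
have lamE : lam = j / h ubar by rewrite /lam /Rayleigh Jj -EFinM.
have lam0 : 0 < lam by rewrite lamE divr_gt0.
have lamh : lam * h ubar = j by rewrite lamE mulrVK // unitfE gt_eqF.
have key : forall v, v != 0 -> (J v <= (lam * h v)%:E)%E.
  move=> v v0; have := Hmax v v0; rewrite /Rayleigh -/(h v) -/(h ubar) Jj -EFinM.
  have hv := hpos v v0.
  move: (Jninf v); case: (J v) => [r| |] //.
  - move=> _; rewrite -EFinM !lee_fin -lamE => E.
    by rewrite -ler_pdivrMr // mulrC.
  - by rewrite mulyr gtr0_sg ?invr_gt0 // mul1e leye_eq.
have main : forall v, j + zbar (v - ubar) <= lam * h v.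
  move=> v; have Z := zsub v; rewrite Jj in Z.
  have [->|v0] := eqVneq v 0.
  - rewrite h0 mulr0 sub0r -scaleN1r zsc.
    set w := (1/2 : R) *: ubar.
    have w0 : w != 0 by rewrite scaler_eq0 negb_or ub0 andbT; apply/eqP; lra.
    have Zw := le_trans (zsub w) (key w w0).
    rewrite Jj -EFinD lee_fin in Zw.
    have wE : w - ubar = (-(1/2)) *: ubar.
      by rewrite /w -{2}(scale1r ubar) -scalerBl; congr (_ *: _); lra.
    move: Zw; rewrite wE /w hhom zsc.
    have hp : `|(1/2 : R)| `^ p <= 1/2.
      rewrite ger0_norm; last lra.
      apply: ge1r_powR; [apply/andP; split|]; lra.
    have : lam * (`|(1/2 : R)| `^ p * h ubar) <= lam * (1/2 * h ubar).
      by rewrite ler_pM2l // ler_pM2r.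
    rewrite mulrCA lamh mulrCA lamh => E1 E2.
    nra.
  - have := le_trans Z (key v v0); rewrite -EFinD lee_fin //.
split.
  split.
    split.
      by move=> a x y; rewrite zadd mulrDl mulrA.
    by move=> x; apply: cvgMl; exact: zcont.
  move=> v; rewrite !HE -EFinD lee_fin.
  have := main v; rewrite -lamh => E.
  rewrite -(ler_pM2l lam0) mulrDr mulrCA divff ?gt_eqF // mulr1; lra.
split => //.
- by rewrite lamE /Rayleigh Jj -EFinM.
- exists (fun v => zbar v / lam); split; last first.
    by move=> x; rewrite mulrCA divff ?gt_eqF // mulr1.
  split.
    split.
      by move=> a x y; rewrite zadd mulrDl mulrA.
    by move=> x; apply: cvgMl; exact: zcont.
  move=> v; rewrite !HE -EFinD lee_fin.
  have := main v; rewrite -lamh => E.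
  rewrite -(ler_pM2l lam0) mulrDr mulrCA divff ?gt_eqF // mulr1; lra.
Qed.
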